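(* Let $s,a,\sigma$ be positive integers, let $X$ be a set of cardinality $s$, and let $\pi_1,\ldots,\pi_\sigma$ be partitions of $X$ such that every part of every $\pi_i$ has cardinality at least $a$. Then there exists a subset $Y\subseteq X$ with $|Y|\ge s(1-1/a)^\sigma$ such that $Y$ contains no part of $\pi_i$ for any $i\in\{1,\ldots,\sigma\}$. *)

(* Defs.v *)
From mathcomp Require Import all_boot all_order all_algebra.
Set Implicit Arguments. Unset Strict Implicit. Unset Printing Implicit Defensive.

(* Main.v *)
Require Import Defs.
From mathcomp Require Import all_boot all_order all_algebra.
From mathcomp Require Import ring.
Import Order.TTheory GRing.Theory Num.Theory.

Lemma step (T : finType) (a : nat) (Y : {set T}) (P0 : {set {set T}})
  (hP0 : trivIset P0) (hne : set0 \notin P0)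
  (hsz : forall B, B \in P0 -> (a <= #|B|)%N) :
  exists Y' : {set T}, [/\ Y' \subset Y, ((a - 1) * #|Y| <= a * #|Y'|)%N
     & forall B, B \in P0 -> ~~ (B \subset Y')].
Proof.
set P := [set B in P0 | B \subset Y].
set R := (fun B : {set T} => [pick x in B]) @: P.
exists [set x in Y | Some x \notin R]; split.
- by apply/subsetP => x; rewrite inE => /andP[].
- have hPs : P \subset P0 by apply/subsetP => B; rewrite inE => /andP[].
  have tP : trivIset P := trivIsetS hPs hP0.
  have h1 : (a * #|P| <= #|Y|)%N.
    apply: (leq_trans _ (_ : #|cover P| <= _)%N).
      rewrite -(eqP tP) mulnC -sum_nat_const; apply: leq_sum => B.
      by rewrite inE => /andP[/hsz].
    apply: subset_leq_card; apply/bigcupsP => B; rewrite inE => /andP[].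
  done.
  have h2 : (#|Y| <= #|[set x in Y | Some x \notin R]| + #|P|)%N.
    rewrite {1}(_ : Y = [set x in Y | Some x \notin R] :|: [set x in Y | Some x \in R]);
      last first.
      by apply/setP => x; rewrite !inE; case: (x \in Y); case: (Some x \in R).
    apply: (leq_trans (leq_card_setU _ _).1); rewrite leq_add2l.
    apply: (leq_trans _ (leq_imset_card _ _)).
    rewrite -(card_imset _ (@Some_inj _)); apply: subset_leq_card.
    apply/subsetP => y /imsetP[x]; rewrite inE => /andP[_ hx] ->; exact: hx.
  have ha : (a * #|Y| <= a * #|[set x in Y | Some x \notin R]| + #|Y|)%N.

    apply: (leq_trans (leq_mul (leqnn a) h2) _). rewrite mulnDr leq_add2l. exact: h1.
  rewrite mulnBl mul1n leq_subLR addnC; exact: ha.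
- move=> B hB; apply/negP => hsub.
  have hY' : [set x in Y | Some x \notin R] \subset Y by apply/subsetP => x; rewrite inE => /andP[].
  have hBY : B \subset Y := subset_trans hsub hY'.
  have hBP : B \in P by rewrite inE hB hBY.
  case hp: [pick x in B] => [x|].
  + have hx : x \in B by move: hp; case: pickP => // y hy [<-].
    have : x \in [set x in Y | Some x \notin R] := subsetP hsub x hx.
    rewrite inE => /andP[_]; apply/negP/negPn.
    by apply/imsetP; exists B => //; rewrite hp.
  + move: hp; case: pickP => // h0 _.
    have hB0 : B = set0 by apply/setP => y; rewrite inE h0.
    by move: hne; rewrite -hB0 hB.
Qed.

Theorem lemma2p7 (T : finType) (s a sigma : nat)
    (hs : (0 < s)%N) (ha : (0 < a)%N) (hsigma : (0 < sigma)%N)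
    (X : {set T}) (hX : #|X| = s)
    (pi : 'I_sigma -> {set {set T}})
    (hpart : forall i, partition (pi i) X)
    (hsize : forall i B, B \in pi i -> (a <= #|B|)%N) :
  exists Y : {set T},
    [/\ Y \subset X,
        (s%:R * (1 - 1 / a%:R) ^+ sigma <= (#|Y|%:R : rat))%R
      & forall i B, B \in pi i -> ~~ (B \subset Y)].
Proof.
have hq : (0 <= 1 - 1 / a%:R :> rat)%R.
  rewrite subr_ge0 mul1r invf_le1 ?ler1n ?ltr0n //.
suff H : forall k, (k <= sigma)%N -> exists Y : {set T},
    [/\ Y \subset X,
        (s%:R * (1 - 1 / a%:R) ^+ k <= (#|Y|%:R : rat))%R
      & forall i : 'I_sigma, (i < k)%N -> forall B, B \in pi i -> ~~ (B \subset Y)].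
  have [Y [h1 h2 h3]] := H sigma (leqnn _).
  by exists Y; split => // i B; apply: h3.
elim=> [_|k IH hk].
  exists X; split => //; first by rewrite expr0 mulr1 hX.
have [Y [h1 h2 h3]] := IH (ltnW hk).
set i0 : 'I_sigma := Ordinal hk.
have /and3P[_ tP nP] := hpart i0.
have [Y' [s1 s2 s3]] := @step _ _ Y _ tP nP (@hsize i0).
exists Y'; split.
- exact: subset_trans s1 h1.
- rewrite exprSr mulrA.
  apply: (le_trans (ler_wpM2r hq h2)).
  have ha' : (0 < a%:R :> rat)%R by rewrite ltr0n.
  rewrite -(ler_pM2l ha').
  have -> : (a%:R * (#|Y|%:R * (1 - 1 / a%:R)) = (a%:R - 1) * #|Y|%:R :> rat)%R.
    by field; rewrite gt_eqF.
  have := s2; rewrite -(ler_nat rat) natrM natrB // => /le_trans; apply.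
  by rewrite natrM.
- move=> i hi B hB; rewrite ltnS leq_eqVlt in hi; case/orP: hi => hi.
  + have ei : i = i0 by apply: val_inj; exact/eqP.
    by rewrite ei in hB; apply: s3.
  + apply/negP => hBY'; move/negP: (h3 i hi B hB); apply.
    exact: subset_trans hBY' s1.
Qed.
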